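(* Let $P=\Bbbk[x_1,x_2,x_3]$ with Poisson bracket $\{x_1,x_2\}=0$, $\{x_2,x_3\}=2x_1x_2$, $\{x_3,x_1\}=x_1^2$. If $G$ is a nontrivial finite subgroup of $\mathrm{PAut}_{\mathrm{gr}}(P)$ generated by Poisson reflections, then $P^G$ is not isomorphic to $P$ as Poisson algebras.
   Context: $\Bbbk$ is algebraically closed of characteristic $0$; $P$ has the standard grading. $\mathrm{PAut}_{\mathrm{gr}}(P)$ is the group of degree-preserving bijective algebra homomorphisms preserving the bracket. A Poisson reflection is a finite-order $\phi\in\mathrm{PAut}_{\mathrm{gr}}(P)$ such that $\phi|_{P_1}$ has eigenvalues $1,1,\xi$ with $\xi\neq1$ a primitive root of unity. $P^G$ is the subalgebra of $G$-invariants with the restricted bracket. *)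

(* Defs.v *)
From HB Require Import structures.
From mathcomp Require Import all_boot all_order all_algebra.
From mathcomp Require Import mpoly.
From Stdlib Require List.
Set Implicit Arguments. Unset Strict Implicit. Unset Printing Implicit Defensive.
Import GRing.Theory.
Local Open Scope ring_scope.

(* P = k[x1,x2,x3]; variables x1,x2,x3 are 'X_0,'X_1,'X_2. *)
Notation Pol k := {mpoly k[3]}.

Section Defs.
Variable k : fieldType.

Definition x1 : Pol k := 'X_(0 : 'I_3).
Definition x2 : Pol k := 'X_(1 : 'I_3).
Definition x3 : Pol k := 'X_(2 : 'I_3).

Definition brgen (i j : 'I_3) : Pol k :=
  match nat_of_ord i, nat_of_ord j with
  | 1, 2 => 2%:R * x1 * x2
  | 2, 1 => - (2%:R * x1 * x2)
  | 2, 0 => x1 ^+ 2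
  | 0, 2 => - x1 ^+ 2
  | _, _ => 0
  end.

Definition pbr (f g : Pol k) : Pol k :=
  \sum_(i < 3) \sum_(j < 3) mderiv i f * mderiv j g * brgen i j.

Definition is_gr_poisson_aut (phi : Pol k -> Pol k) : Prop :=
  [/\ bijective phi,
      (forall f g, phi (f + g) = phi f + phi g),
      (forall f g, phi (f * g) = phi f * phi g),
      phi 1 = 1 &
      (forall (c : k) f, phi (c *: f) = c *: phi f)] /\
  (forall (d : nat) f, f \is d.-homog -> phi f \is d.-homog) /\
  (forall f g, phi (pbr f g) = pbr (phi f) (phi g)).

Definition deg1_mx (phi : Pol k -> Pol k) : 'M[k]_3 :=
  \matrix_(i < 3, j < 3) (phi 'X_i)@_(U_(j)%MM).

Definition finite_order (phi : Pol k -> Pol k) : Prop :=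
  exists n : nat, (0 < n)%N /\ forall f, iter n phi f = f.

Definition poisson_reflection (phi : Pol k -> Pol k) : Prop :=
  is_gr_poisson_aut phi /\ finite_order phi /\
  exists xi : k, [/\ xi != 1,
     (exists n : nat, (0 < n)%N /\ n.-primitive_root xi) &
     char_poly (deg1_mx phi) = ('X - 1) ^+ 2 * ('X - xi%:P)].

Definition is_finite_subgroup (G : seq (Pol k -> Pol k)) : Prop :=
  [/\ (forall g, List.In g G -> is_gr_poisson_aut g),
      List.In id G,
      (forall g h, List.In g G -> List.In h G -> List.In (g \o h) G) &
      (forall g, List.In g G -> exists2 h, List.In h G & forall f, h (g f) = f)].

(* G is generated by the Poisson reflections it contains (G finite, so
   every element is a finite composite of such reflections). *)
Definition generated_by_reflections (G : seq (Pol k -> Pol k)) : Prop :=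
  forall g, List.In g G ->
    exists rs : seq (Pol k -> Pol k),
      (forall r, List.In r rs -> List.In r G /\ poisson_reflection r) /\
      forall f, g f = foldr (fun r acc => r \o acc) id rs f.

Definition invariant (G : seq (Pol k -> Pol k)) (f : Pol k) : Prop :=
  forall g, List.In g G -> g f = f.

Definition invariants_poisson_iso_P (G : seq (Pol k -> Pol k)) : Prop :=
  exists psi : Pol k -> Pol k,
    [/\ injective psi,
        (forall f g, psi (f + g) = psi f + psi g),
        (forall f g, psi (f * g) = psi f * psi g),
        psi 1 = 1 &
        (forall (c : k) f, psi (c *: f) = c *: psi f)] /\
    [/\ (forall f, invariant G (psi f)),
        (forall h, invariant G h -> exists f, psi f = h) &
        (forall f g, psi (pbr f g) = pbr (psi f) (psi g))].
End Defs.

(* Main.v *)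
Require Import Defs.
From HB Require Import structures.
From mathcomp Require Import all_boot all_order all_algebra.
From mathcomp Require Import mpoly.
From Stdlib Require List.
From mathcomp Require Import ring.
Local Open Scope ring_scope.

Module Aux.
Set Implicit Arguments. Unset Strict Implicit. Unset Printing Implicit Defensive.
Import GRing.Theory.
Local Open Scope ring_scope.

Section S.
Variable k : fieldType.
Notation P := {mpoly k[3]}.
Definition i0 : 'I_3 := 0. Definition i1 : 'I_3 := 1. Definition i2 : 'I_3 := 2.

Lemma ordE : [/\ (ord0 : 'I_3) = i0, (lift ord0 ord0 : 'I_3) = i1 &
   (lift ord0 (lift ord0 ord0) : 'I_3) = i2].
Proof. by split; apply/val_inj. Qed.

Lemma sum3 (T : zmodType) (F : 'I_3 -> T) : \sum_(i<3) F i = F i0 + F i1 + F i2.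
Proof. by rewrite !big_ord_recl big_ord0 addr0 addrA; case: ordE => -> -> ->. Qed.

Lemma prod3 (T : comRingType) (F : 'I_3 -> T) : \prod_(i<3) F i = F i0 * F i1 * F i2.
Proof. by rewrite !big_ord_recl big_ord0 mulr1 mulrA; case: ordE => -> -> ->. Qed.

Definition det3 (T : comRingType) (M : 'I_3 -> 'I_3 -> T) :=
  M i0 i0 * (M i1 i1 * M i2 i2 - M i1 i2 * M i2 i1)
  - M i0 i1 * (M i1 i0 * M i2 i2 - M i1 i2 * M i2 i0)
  + M i0 i2 * (M i1 i0 * M i2 i1 - M i1 i1 * M i2 i0).

Lemma det3_mul (T : comRingType) (A B : 'I_3 -> 'I_3 -> T) :
  det3 (fun i j => \sum_(l < 3) A i l * B l j) = det3 A * det3 B.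
Proof. rewrite /det3 !sum3; ring. Qed.

Lemma ord3P (i : 'I_3) : [\/ i = i0, i = i1 | i = i2].
Proof.
case: i => [[|[|[|m]]] Hm]; first by constructor 1; apply/val_inj.
- by constructor 2; apply/val_inj.
- by constructor 3; apply/val_inj.
- by [].
Qed.

Lemma pbrE (f g : P) : pbr f g =
  (mderiv i1 f * mderiv i2 g - mderiv i2 f * mderiv i1 g) * (2%:R * x1 k * x2 k)
  + (mderiv i2 f * mderiv i0 g - mderiv i0 f * mderiv i2 g) * (x1 k ^+ 2).
Proof.
rewrite /pbr !big_ord_recl !big_ord0 /= /brgen /=.
case: ordE => -> -> ->. ring.
Qed.

Lemma mpoly_ind3 (Q : P -> Prop) :
  (forall c, Q c%:MP) -> (forall i, Q 'X_i) ->
  (forall p q, Q p -> Q q -> Q (p + q)) -> (forall p q, Q p -> Q q -> Q (p * q)) ->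
  forall p, Q p.
Proof.
move=> HC HX HD HM p; rewrite [p]mpolyE.
apply: (big_ind Q); [by rewrite -mpolyC0 | exact: HD|] => m _.
rewrite -mul_mpolyC; apply: (HM) => //.
rewrite mpolyXE_id; apply: (big_ind Q); [by rewrite -mpolyC1 | exact: HM|] => i _.
elim: (m i) => [|e IH]; first by rewrite expr0 -mpolyC1.
by rewrite exprS; apply: (HM).
Qed.

Lemma lin_form (p : P) : p \is 1.-homog -> p = \sum_(j<3) p@_U_(j) *: 'X_j.
Proof.
move=> hp; apply/mpolyP => m; rewrite raddf_sum /=.
under eq_bigr do rewrite mcoeffZ mcoeffX.
case: (boolP (mdeg m == 1%N)) => [/mdeg1P [i /eqP ->]|hm].
  rewrite (bigD1 i) //= eqxx mulr1 big1 ?addr0 // => j /negbTE hj.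
  case: eqP => [/mnmP /(_ i)|]; last by rewrite mulr0.
  by rewrite !mnm1E eqxx hj.
rewrite (dhomog_nemf_coeff hp hm) big1 // => j _.
case: eqP => [hj|]; last by rewrite mulr0.
by move: hm; rewrite -hj; move/mdeg1P; case; exists j.
Qed.


Lemma mderivXU (l i : 'I_3) : mderiv l ('X_i : P) = (i == l)%:R.
Proof.
rewrite mderivX mnm1E; case: eqP => [->|_]; last by rewrite scale0r.
have -> : (U_(l) - U_(l) = 0)%MM by apply/mnmP => j; rewrite mnmBE mnm0E subnn.
by rewrite scale1r mpolyX0.
Qed.

Definition ahom (phi : P -> P) := [/\ (forall f g, phi (f + g) = phi f + phi g),
      (forall f g, phi (f * g) = phi f * phi g), phi 1 = 1 &
      (forall (c : k) f, phi (c *: f) = c *: phi f)].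

Section Ahom.
Variable phi : P -> P.
Hypothesis hphi : ahom phi.

Lemma ah_D f g : phi (f + g) = phi f + phi g. Proof. by case: hphi. Qed.
Lemma ah_M f g : phi (f * g) = phi f * phi g. Proof. by case: hphi. Qed.
Lemma ah_1 : phi 1 = 1. Proof. by case: hphi. Qed.
Lemma ah_Z c f : phi (c *: f) = c *: phi f. Proof. by case: hphi. Qed.
Lemma ah_0 : phi 0 = 0.
Proof. by rewrite -(scale0r (1:P)) ah_Z !scale0r. Qed.
Lemma ah_C c : phi c%:MP = c%:MP.
Proof. by rewrite -alg_mpolyC ah_Z ah_1 alg_mpolyC. Qed.
Lemma ah_N f : phi (- f) = - phi f.
Proof. by rewrite -scaleN1r ah_Z scaleN1r. Qed.
Lemma ah_B f g : phi (f - g) = phi f - phi g.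
Proof. by rewrite ah_D ah_N. Qed.
Lemma ah_X f n : phi (f ^+ n) = phi f ^+ n.
Proof. by elim: n => [|n IH]; rewrite ?expr0 ?ah_1 // !exprS ah_M IH. Qed.
Lemma ah_n n : phi n%:R = n%:R.
Proof. by rewrite -mpolyC_nat ah_C. Qed.

Lemma chain j f : mderiv j (phi f) =
  \sum_(l < 3) phi (mderiv l f) * mderiv j (phi 'X_l).
Proof.
elim/mpoly_ind3: f => [c|i|p q Hp Hq|p q Hp Hq].
- rewrite ah_C mderivC big1 // => l _; by rewrite mderivC ah_0 mul0r.
- rewrite (bigD1 i) //= big1 ?addr0.
    by rewrite mderivXU eqxx ah_n mul1r.
  by move=> l /negbTE hl; rewrite mderivXU eq_sym hl ah_n mul0r.
- rewrite ah_D mderivD Hp Hq -big_split /=; apply: eq_bigr => l _.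
  by rewrite mderivD ah_D mulrDl.
- rewrite ah_M mderivM Hp Hq mulr_suml mulr_sumr -big_split /=; apply: eq_bigr => l _.
  rewrite mderivM ah_D !ah_M. ring.
Qed.

Lemma meval_ah (v : 'I_3 -> k) f : (forall i, meval v (phi 'X_i) = v i) ->
  meval v (phi f) = meval v f.
Proof.
move=> hv; elim/mpoly_ind3: f => [c|i|p q Hp Hq|p q Hp Hq].
- by rewrite ah_C.
- by rewrite hv mevalXU.
- by rewrite ah_D !mevalD Hp Hq.
- by rewrite ah_M !mevalM Hp Hq.
Qed.
End Ahom.

Definition L (u : 'I_3 -> k) : P := \sum_(j < 3) u j *: 'X_j.

Lemma dL l u : mderiv l (L u) = (u l)%:MP.
Proof.
rewrite /L raddf_sum /=.
under eq_bigr do rewrite mderivZ mderivXU.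
rewrite (bigD1 l) //= eqxx big1 ?addr0; first by rewrite -mpolyC_nat -mul_mpolyC -mpolyCM mulr1.
by move=> j /negbTE ->; rewrite scaler0.
Qed.

Lemma mev_L v u : meval v (L u) = \sum_(j < 3) u j * v j.
Proof. by rewrite /L raddf_sum /=; apply: eq_bigr => j _; rewrite mevalZ mevalXU. Qed.

Lemma mev_x v : [/\ meval v (x1 k) = v i0, meval v (x2 k) = v i1 & meval v (x3 k) = v i2].
Proof. by rewrite /x1 /x2 /x3 !mevalXU. Qed.

Lemma mev_pbr_L v u w : meval v (pbr (L u) (L w)) =
  (u i1 * w i2 - u i2 * w i1) * (2%:R * v i0 * v i1) + (u i2 * w i0 - u i0 * w i2) * v i0 ^+ 2.
Proof.
rewrite pbrE !dL; case: (mev_x v) => h0 h1 h2.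
rewrite !(mevalD, mevalN, mevalB, mevalM, mevalC, rmorph_nat, rmorphXn) h0 h1; ring.
Qed.

Definition vv (a b c : k) (i : 'I_3) : k := if i == i0 then a else if i == i1 then b else c.

Lemma vvE a b c : [/\ vv a b c i0 = a, vv a b c i1 = b & vv a b c i2 = c].
Proof. by rewrite /vv. Qed.


Lemma pbr_gen : [/\ pbr (x1 k) (x2 k) = 0, pbr (x2 k) (x3 k) = 2%:R * x1 k * x2 k &
   pbr (x3 k) (x1 k) = x1 k ^+ 2].
Proof.
rewrite !pbrE /x1 /x2 /x3 !mderivXU /=.
split; ring.
Qed.

Lemma sumL u : L u = u i0 *: x1 k + u i1 *: x2 k + u i2 *: x3 k.
Proof. by rewrite /L sum3. Qed.

Lemma X_neq0 (i : 'I_3) : ('X_i : P) != 0.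
Proof.
apply/eqP => h; have := @mcoeffXU 3 k i i; rewrite h mcoeff0 eqxx => /eqP.
by rewrite eq_sym oner_eq0.
Qed.

Lemma gpa_ahom phi : is_gr_poisson_aut phi -> ahom phi.
Proof. by case=> [[_ hD hM h1 hZ] _]; split. Qed.

Lemma gpa_lin phi i : is_gr_poisson_aut phi -> phi 'X_i = L (fun j => deg1_mx phi i j).
Proof.
case=> _ [hh _]; have : ('X_i : P) \is 1.-homog.
 by rewrite dhomogX; apply/mdeg1P; exists i.
move/hh/lin_form => ->; rewrite /L; apply: eq_bigr => j _; by rewrite mxE.
Qed.

Lemma ah_L phi u : ahom phi -> phi (L u) = \sum_(j < 3) u j *: phi 'X_j.
Proof.
move=> ha; rewrite /L; elim/big_rec2: _ => [|j y1 y2 _ <-]; first exact: (ah_0 ha).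
by rewrite (ah_D ha) (ah_Z ha).
Qed.

Hypothesis char0 : [pchar k] =i pred0.

Lemma natf_neq0 n : (0 < n)%N -> (n%:R : k) != 0.
Proof. by move: char0 => /pcharf0P ->; case: n. Qed.

Lemma natf_eq0 n : ((n%:R : k) == 0) = (n == 0)%N.
Proof. by move: char0 => /pcharf0P. Qed.

Lemma natf_inj a b : (a%:R : k) = b%:R -> a = b.
Proof.
move=> e; case: (ltngtP a b) => // h; exfalso.
- have : ((b - a)%N%:R : k) == 0 by rewrite (natrB k (ltnW h)) e subrr.
  by rewrite natf_eq0 subn_eq0 leqNgt h.
- have : ((a - b)%N%:R : k) == 0 by rewrite (natrB k (ltnW h)) e subrr.
  by rewrite natf_eq0 subn_eq0 leqNgt h.
Qed.

Lemma mulrn_inj (c : k) a b : c != 0 -> c *+ a = c *+ b -> a = b.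
Proof. by move=> hc; rewrite -[c *+ a]mulr_natr -[c *+ b]mulr_natr => /(mulfI hc) /natf_inj. Qed.

Lemma mulrn_eq0 (c : k) n : (0 < n)%N -> c *+ n = 0 -> c = 0.
Proof.
move=> hn /eqP; rewrite -mulr_natr mulf_eq0 (negbTE (natf_neq0 hn)) orbF.
by move/eqP.
Qed.


Lemma linL (w : 'I_3 -> k) (u : 'I_3 -> 'I_3 -> k) :
  \sum_(j < 3) w j *: L (u j) = L (fun l => \sum_(j < 3) w j * u j l).
Proof.
rewrite /L; under eq_bigr do rewrite scaler_sumr.
rewrite exchange_big; apply: eq_bigr => l _; rewrite scaler_suml.
by apply: eq_bigr => j _; rewrite scalerA.
Qed.

Lemma refl_form r : poisson_reflection r ->
  exists xi e n, [/\ (0 < n)%N, xi ^+ n = 1, xi != 1,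
     r (x1 k) = x1 k /\ r (x2 k) = xi *: x2 k & r (x3 k) = x3 k + e *: x2 k].
Proof.
case=> hg [[n [hn hit]] [xi [hxi1 [m [hm hprim]] hchar]]].
have ha := gpa_ahom hg.
have [[hbij _ _ _ _] [_ hbr]] := hg.
set A := deg1_mx r.
have hX i : r 'X_i = L (fun j => A i j) := gpa_lin i hg.
have E3 : pbr (L (fun j => A i2 j)) (L (fun j => A i0 j)) = L (fun j => A i0 j) ^+ 2.
  by rewrite -!hX -hbr; case: pbr_gen => _ _ ->; rewrite (ah_X ha).
have E2 : pbr (L (fun j => A i1 j)) (L (fun j => A i2 j)) =
    2%:R * L (fun j => A i0 j) * L (fun j => A i1 j).
  by rewrite -!hX -hbr; case: pbr_gen => _ -> _; rewrite !(ah_M ha) (ah_n ha).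
have e3a := congr1 (meval (vv 0 0 1)) E3.
have e3b := congr1 (meval (vv 0 1 0)) E3.
have e3c := congr1 (meval (vv 1 0 0)) E3.
have e2a := congr1 (meval (vv 1 0 0)) E2.
have e2b := congr1 (meval (vv 1 0 1)) E2.
rewrite !(mev_pbr_L, rmorphXn, mevalM, rmorph_nat, mev_L, sum3) /vv /= in e3a e3b e3c e2a e2b.
rewrite !mev_L !sum3 /= in e3a e3b e3c.
rewrite !(mulr0, mul0r, mulr1, mul1r, addr0, add0r, expr1n, subr0, sub0r) in e3a e3b e3c e2a e2b.
try rewrite expr0n /= mulr0 in e3a e3b.
have a02 : A i0 i2 = 0 by apply/eqP; move: e3a => /esym/eqP; rewrite expf_eq0.
have a01 : A i0 i1 = 0 by apply/eqP; move: e3b => /esym/eqP; rewrite expf_eq0.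
have hx1 : r (x1 k) = A i0 i0 *: x1 k by rewrite /x1 hX sumL a01 a02 !scale0r !addr0.
have a00 : A i0 i0 != 0.
  apply/eqP => h0; have : r (x1 k) = r 0 by rewrite hx1 h0 scale0r (ah_0 ha).
  by move/(bij_inj hbij)/eqP; apply/negP; exact: (X_neq0 i0).
have a22 : A i2 i2 = A i0 i0.
  by rewrite a02 mulr0 subr0 expr2 in e3c; exact: (mulIf a00 e3c).
have n20 : (2%:R : k) != 0 by exact: natf_neq0.
have n30 : (3%:R : k) != 0 by exact: natf_neq0.
have a12 : A i1 i2 = 0.
  have h : 2%:R * A i0 i0 * A i1 i2 = 2%:R * (A i0 i0 + A i0 i2) * (A i1 i0 + A i1 i2)
     - 2%:R * A i0 i0 * A i1 i0 by rewrite a02; ring.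
  rewrite -e2b e2a subrr in h.
  by move/eqP: h; rewrite !mulf_eq0 (negbTE n20) (negbTE a00) /= => /eqP.
have a10 : A i1 i0 = 0.
  have h : 3%:R * A i0 i0 * A i1 i0 = 2%:R * A i0 i0 * A i1 i0 -
     (A i1 i2 * A i2 i0 - A i1 i0 * A i2 i2) by rewrite a12 a22; ring.
  rewrite -e2a subrr in h.
  by move/eqP: h; rewrite !mulf_eq0 (negbTE n30) (negbTE a00) /= => /eqP.
have htrig : is_trig_mx A.
  apply/is_trig_mxP => i j hij.
  by case: (ord3P i) hij => ->; case: (ord3P j) => -> //.
rewrite char_poly_trig // !big_ord_recl big_ord0 mulr1 in hchar.
case: ordE hchar => -> -> -> hchar.
rewrite -/A a22 in hchar.
have ev x := congr1 (horner^~ x) hchar.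
have hxi0 : xi != 0.
  apply/eqP => h0; have := prim_expr_order hprim; rewrite h0 expr0n.
  by case: m hm {hprim} => // m' _ /eqP; rewrite eq_sym oner_eq0.
have [ha00 hb] : A i0 i0 = 1 /\ A i1 i1 = xi.
  have e1 := ev 1; have e0 := ev 0; rewrite !hornerE /= in e1 e0.
  rewrite subrr expr0n /= mul0r in e1.
  case: (eqVneq (A i0 i0) 1) => h1.
    split => //; rewrite h1 in e0.
    have -> : A i1 i1 = - (-1 * - A i1 i1 * - 1) by ring.
    by rewrite e0; ring.
  have hb1 : A i1 i1 = 1.
    move/eqP: e1; rewrite !mulf_eq0 !subr_eq0 (eq_sym 1 (A i0 i0)) (negbTE h1) /= orbF.
    by move/eqP.
  have ea := ev (A i0 i0); rewrite !hornerE /= subrr !(mul0r, mulr0) in ea.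
  move/esym/eqP: ea; rewrite mulf_eq0 expf_eq0 /= !subr_eq0 (negbTE h1) /= => /eqP hax.
  rewrite hb1 hax in e0.
  have h : xi * (xi - 1) = ((-1) ^+ 2 * - xi) - (- xi * - 1 * - xi) by ring.
  rewrite -e0 subrr in h.
  by move/eqP: h; rewrite mulf_eq0 subr_eq0 (negbTE hxi0) (negbTE hxi1).
have hA20 : A i2 i0 = 0.
  have claim p : exists w, iter p r (x3 k) = L w /\ w i2 = 1 /\ w i0 = A i2 i0 *+ p.
    elim: p => [|p [w [hw [w2 w0]]]].
      exists (vv 0 0 1); rewrite /= sumL /vv /= !scale0r !add0r scale1r; split => //.
    exists (fun l => \sum_(j<3) w j * A j l); split.
      by rewrite iterS hw (ah_L _ ha); under eq_bigr do rewrite hX; rewrite linL.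
    rewrite !sum3 w2 w0 a02 a12 a22 ha00 a10 mulrS; split; ring.
  have [w [hw [_ w0]]] := claim n; rewrite hit in hw.
  have := congr1 (meval (vv 1 0 0)) hw; case: (mev_x (vv 1 0 0)) => _ _ ->.
  rewrite mev_L sum3 /vv /= !mulr0 !addr0 mulr1 w0.
  by move/esym; apply: mulrn_eq0.
exists xi, (A i2 i1), m; split => //; first exact: prim_expr_order.
  split; first by rewrite hx1 ha00 scale1r.
  by rewrite /x2 hX sumL a10 hb a12 !scale0r add0r addr0.
by rewrite /x3 hX sumL hA20 a22 ha00 scale0r add0r scale1r addrC.
Qed.


Definition bet (g : P -> P) := (g (x2 k))@_U_(i1).
Definition eps (g : P -> P) := (g (x3 k))@_U_(i1).
Definition good (g : P -> P) := [/\ g (x1 k) = x1 k, g (x2 k) = bet g *: x2 k,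
   g (x3 k) = x3 k + eps g *: x2 k & exists N, (0 < N)%N /\ bet g ^+ N = 1].

Lemma good_intro g b e N : (0 < N)%N -> b ^+ N = 1 -> g (x1 k) = x1 k ->
  g (x2 k) = b *: x2 k -> g (x3 k) = x3 k + e *: x2 k ->
  [/\ good g, bet g = b & eps g = e].
Proof.
move=> hN hb h1 h2 h3.
have eb : bet g = b by rewrite /bet h2 mcoeffZ /x2 mcoeffXU eqxx mulr1.
have ee : eps g = e by rewrite /eps h3 mcoeffD mcoeffZ /x2 /x3 !mcoeffXU eqxx mulr1 /= add0r.
by split => //; split; rewrite ?eb ?ee //; exists N.
Qed.

Lemma good_comp g h : ahom g -> good g -> good h ->
  [/\ good (g \o h), bet (g \o h) = bet g * bet h & eps (g \o h) = eps g + bet g * eps h].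
Proof.
move=> ha [g1 g2 g3 [Ng [hNg bg]]] [h1 h2 h3 [Nh [hNh bh]]].
apply: (@good_intro _ _ _ (Ng * Nh)).
- by rewrite muln_gt0 hNg.
- by rewrite exprMn exprM bg expr1n mulnC exprM bh expr1n mulr1.
- by rewrite /= h1 g1.
- by rewrite /= h2 (ah_Z ha) g2 scalerA mulrC.
- by rewrite /= h3 (ah_D ha) (ah_Z ha) g3 g2 scalerA -addrA -scalerDl (mulrC (eps h)).
Qed.

Lemma good_ext g h : (forall f, g f = h f) -> good h -> [/\ good g, bet g = bet h & eps g = eps h].
Proof.
move=> e [h1 h2 h3 [N [hN hb]]].
by apply: (@good_intro _ _ _ N); rewrite ?e.
Qed.

Lemma refl_good r : poisson_reflection r -> good r.
Proof.
move=> hr; have [xi [e [n [hn hxn _ [h1 h2] h3]]]] := refl_form hr.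
by case: (good_intro hn hxn h1 h2 h3).
Qed.

Lemma foldr_good (rs : seq (P -> P)) : (forall r, List.In r rs -> poisson_reflection r) ->
  good (foldr (fun r acc => r \o acc) id rs).
Proof.
elim: rs => [|r rs IH] hrs /=.
  by case: (@good_intro id 1 0 1%N) => //; rewrite ?expr1 ?scale1r ?scale0r ?addr0.
have hr : poisson_reflection r by apply: hrs; left.
have [hg _ _] := good_comp (gpa_ahom hr.1) (refl_good hr) (IH (fun r' h => hrs r' (or_intror h))).
exact: hg.
Qed.

Lemma common_N (G : seq (P -> P)) : (forall g, List.In g G -> good g) ->
  exists N, (0 < N)%N /\ forall g, List.In g G -> bet g ^+ N = 1.
Proof.
elim: G => [|g G IH] hG; first by exists 1%N.
have [N [hN hNG]] := IH (fun g' h => hG g' (or_intror h)).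
have [_ _ _ [M [hM hMg]]] := hG g (or_introl erefl).
exists (N * M)%N; split; first by rewrite muln_gt0 hN.
move=> g' [<-|hg']; first by rewrite mulnC exprM hMg expr1n.
by rewrite exprM hNG // expr1n.
Qed.


Definition pr (g : P -> P) : k * k := (bet g, eps g).

Lemma in_mapP (G : seq (P -> P)) s :
  reflect (exists g, List.In g G /\ s = pr g) (s \in map pr G).
Proof.
elim: G => [|g G IH] /=; first by constructor => -[g []].
rewrite in_cons; case: eqP => [->|ne] /=; first by constructor; exists g; split => //; left.
apply: (iffP IH) => [[g' [h ->]]|[g' [[<-|h] e]]]; first by exists g'; split => //; right.
  by case: ne.
by exists g'.
Qed.

Lemma sum_const_seq (T : Type) (s : seq T) (c : k) : \sum_(x <- s) c = c *+ size s.
Proof. by elim: s => [|x s IH]; rewrite ?big_nil ?big_cons ?IH ?mulrS. Qed.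

Section Avg.
Variable G : seq (P -> P).
Hypothesis hsub : is_finite_subgroup G.
Hypothesis hgood : forall g, List.In g G -> good g.

Let S := undup (map pr G).
Definition sigS := \sum_(s <- S) s.2.
Definition f3 : P := (size S)%:R *: x3 k + sigS *: x2 k.

Lemma inS s : s \in S -> exists g, List.In g G /\ s = pr g.
Proof. by rewrite mem_undup => /in_mapP. Qed.

Lemma Sin g : List.In g G -> pr g \in S.
Proof. by move=> hg; rewrite mem_undup; apply/in_mapP; exists g. Qed.

Lemma f3_inv h : List.In h G -> h f3 = f3.
Proof.
move=> hh; case: hsub => hgpa _ hcomp _.
have ha := gpa_ahom (hgpa h hh).
have [h1 h2 h3 [N [hN hb]]] := hgood hh.
have bh0 : bet h != 0.
  apply/eqP => h0; move: hb; rewrite h0 expr0n.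
  by case: N hN => //= N _ /eqP; rewrite eq_sym oner_eq0.
pose f (s : k * k) := (bet h * s.1, eps h + bet h * s.2).
have fS : {subset map f S <= S}.
  move=> s' /mapP [s /inS [g [hg ->]] ->].
  have [_ eb ee] := good_comp ha (hgood hh) (hgood hg).
  by rewrite /f /= -eb -ee; apply: Sin; apply: hcomp.
have fu : uniq (map f S).
  rewrite map_inj_uniq ?undup_uniq // => [[a b] [c d]] [e1 e2].
  rewrite (mulfI bh0 e1); congr pair; apply: (mulfI bh0).
  by apply: (addrI (eps h)).
have [_ eqm] := uniq_min_size fu fS (eq_leq (esym (size_map f S))).
have hp : perm_eq (map f S) S by apply: uniq_perm => //; exact: undup_uniq.
have key : sigS = (size S)%:R * eps h + bet h * sigS.
  rewrite {1}/sigS -(perm_big _ hp) big_map /= big_split /= sum_const_seq.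
  by rewrite -mulr_sumr mulr_natl.
rewrite /f3 (ah_D ha) !(ah_Z ha) h3 h2 scalerDr !scalerA -addrA -scalerDl.
by rewrite (mulrC sigS) -key.
Qed.

End Avg.


Lemma subU_add (i : 'I_3) (m : 'X_{1..3}) : (0 < m i)%N -> (m - U_(i) + U_(i) = m)%MM.
Proof.
move=> hm; apply/mnmP => j; rewrite mnmDE mnmBE mnm1E; case: eqP => [<-|_] /=.
  by rewrite subn1 addn1 prednK.
by rewrite subn0 addn0.
Qed.

Lemma mcoeffXd (i : 'I_3) (p : P) m : ('X_i * mderiv i p)@_m = p@_m *+ m i.
Proof.
rewrite mulrC; case: (posnP (m i)) => hm.
  rewrite hm mulr0n; apply/eqP; rewrite mcoeff_eq0.
  rewrite (perm_mem (msuppMX _ _)); apply/negP => /mapP [m' _ e].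
  by move: hm; rewrite e mnmDE mnm1E eqxx.
have e : m = (U_(i) + (m - U_(i)))%MM.
  apply/mnmP => j; rewrite mnmDE mnmBE mnm1E; case: eqP => [<-|_] /=.
    by rewrite add1n subn1 prednK.
  by rewrite subn0.
rewrite {1}e mcoeffMX mcoeff_mderiv.
have -> : (m - U_(i) + U_(i) = m)%MM by rewrite addmC -e.
by rewrite mnmBE mnm1E eqxx subn1 prednK.
Qed.

Lemma x1_neq0 : x1 k != 0. Proof. exact: X_neq0. Qed.

Section Jan.
Variables (J h : P).
Hypothesis dh0 : mderiv i0 h = J * (2%:R * x1 k * x2 k).
Hypothesis dh1 : mderiv i1 h = J * x1 k ^+ 2.
Hypothesis dh2 : mderiv i2 h = 0.

Lemma dx : [/\ mderiv i0 (x1 k) = 1, mderiv i1 (x1 k) = 0, mderiv i2 (x1 k) = 0,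
   mderiv i0 (x2 k) = 0 & (mderiv i1 (x2 k) = 1 /\ mderiv i2 (x2 k) = 0)].
Proof. by rewrite /x1 /x2 !mderivXU. Qed.

Lemma J_d2 : mderiv i2 J = 0.
Proof.
have := mderiv_comm i1 i2 h; rewrite dh1 dh2 mderiv0 mderivM.
case: dx => _ _ h2 _ _.
rewrite expr2 mderivM h2 !(mul0r, mulr0, addr0) => /eqP.
by rewrite !mulf_eq0 (negbTE x1_neq0) /= orbF => /eqP.
Qed.

Lemma J_euler : 'X_i0 * mderiv i0 J = ('X_i1 * mderiv i1 J) *+ 2.
Proof.
have := mderiv_comm i0 i1 h; rewrite dh0 dh1 -mpolyC_nat expr2 !mderivM !mderivC.
case: dx => d00 d10 _ _ [d11 _]; rewrite d00 d10 d11 mpolyC_nat => e.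
have hh : x1 k * (x1 k * mderiv i0 J - (x2 k * mderiv i1 J) *+ 2) =
  (mderiv i0 J * (x1 k * x1 k) + J * (1 * x1 k + x1 k * 1)) -
  (mderiv i1 J * (2%:R * x1 k * x2 k) + J * ((0 * x1 k + 2%:R * 0) * x2 k + 2%:R * x1 k * 1)).
  ring.
move: hh; rewrite -e subrr => /eqP; rewrite mulf_eq0 (negbTE x1_neq0) /= subr_eq0.
by move/eqP.
Qed.

Lemma J_coef m : J@_m != 0 -> m i0 = (2 * m i1)%N /\ m i2 = 0%N.
Proof.
move=> hJ; split.
  have := congr1 (mcoeff m) J_euler; rewrite mcoeffMn !mcoeffXd -mulrnA.
  by move/(mulrn_inj hJ); rewrite mulnC.
case: (posnP (m i2)) => // hm.
have := congr1 (mcoeff (m - U_(i2))%MM) J_d2; rewrite mcoeff0 mcoeff_mderiv.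
rewrite (subU_add hm) => /mulrn_eq0 h0.
by move: hJ; rewrite h0 // eqxx.
Qed.

Lemma J_eval : meval (vv 0 1 0) J = meval (vv 0 0 0) J.
Proof.
rewrite !mevalE; apply: eq_big_seq => m hm; congr (_ * _).
have hJ : J@_m != 0 by rewrite mcoeff_eq0 negbK.
have [e0 e2] := J_coef hJ.
rewrite !prod3 /vv /= e0 e2 !expr0 !mulr1 expr1n.
case: (posnP (m i1)) => [->|h1]; first by rewrite muln0 !expr0.
by rewrite expr0n muln_eq0 /= eqn0Ngt h1 !mul0r.
Qed.

End Jan.


Lemma grad_id (p : 'I_3 -> P) :
  pbr (p i1) (p i2) = 2%:R * p i0 * p i1 -> pbr (p i2) (p i0) = p i0 ^+ 2 ->
  pbr (p i0) (p i1) = 0 ->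
  let J := det3 (fun l j => mderiv j (p l)) in
  [/\ mderiv i0 (p i0 ^+ 2 * p i1) = J * (2%:R * x1 k * x2 k),
      mderiv i1 (p i0 ^+ 2 * p i1) = J * x1 k ^+ 2 &
      mderiv i2 (p i0 ^+ 2 * p i1) = 0].
Proof.
move=> e12 e20 e01 J.
have gen j : mderiv j (p i0 ^+ 2 * p i1) = pbr (p i1) (p i2) * mderiv j (p i0)
    + pbr (p i2) (p i0) * mderiv j (p i1) + pbr (p i0) (p i1) * mderiv j (p i2).
  rewrite e12 e20 e01 expr2 !mderivM; ring.
rewrite /J /det3 !gen !pbrE; split; ring.
Qed.

Lemma meval_det3 v (M : 'I_3 -> 'I_3 -> P) :
  meval v (det3 M) = det3 (fun i j => meval v (M i j)).
Proof. by rewrite /det3 !(mevalD, mevalB, mevalN, mevalM). Qed.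

Lemma mderivXn j (q : P) n : mderiv j (q ^+ n.+1) = (q ^+ n * mderiv j q) *+ n.+1.
Proof.
elim: n => [|n IH]; first by rewrite expr1 expr0 mul1r.
rewrite exprS mderivM IH -mulrnAr mulrA -exprS (mulrC (mderiv j q)).
by rewrite [in RHS]mulrS mulrnAr.
Qed.


Lemma det3_ext (T : comRingType) (A B : 'I_3 -> 'I_3 -> T) :
  (forall i j, A i j = B i j) -> det3 A = det3 B.
Proof. by move=> e; rewrite /det3 !e. Qed.

Lemma main (G : seq (P -> P)) : is_finite_subgroup G -> generated_by_reflections G ->
  (exists2 g, List.In g G & exists f, g f <> f) -> ~ invariants_poisson_iso_P G.
Proof.
move=> hsub hgen [g0 hg0 [f0 hf0]] [psi [[hinj hD hM h1 hZ] [hinv hsurj hbr]]].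
have hpa : ahom psi by split.
have hgood g : List.In g G -> good g.
  move=> hg; have [rs [hrs hF]] := hgen g hg.
  have hgd := foldr_good (fun r h => (hrs r h).2).
  by case: (good_ext hF hgd).
have [r [hrG hr]] : exists r, List.In r G /\ poisson_reflection r.
  have [rs [hrs hF]] := hgen g0 hg0.
  case: rs hrs hF => [|r rs] hrs hF.
    by exfalso; apply: hf0; rewrite hF.
  by exists r; apply: hrs; left.
have [xi [e [n [hn hxn hxi1 [r1 r2] r3]]]] := refl_form hr.
have [N [hN hNG]] := common_N hgood.
have ra := gpa_ahom hr.1.
pose p l := psi 'X_l.
have e12 : pbr (p i1) (p i2) = 2%:R * p i0 * p i1.
  by rewrite -hbr; case: pbr_gen => _ -> _; rewrite !(ah_M hpa) (ah_n hpa).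
have e20 : pbr (p i2) (p i0) = p i0 ^+ 2.
  by rewrite -hbr; case: pbr_gen => _ _ ->; rewrite (ah_X hpa).
have e01 : pbr (p i0) (p i1) = 0.
  by rewrite -hbr; case: pbr_gen => -> _ _; exact: (ah_0 hpa).
have [dh0 dh1 dh2] := grad_id e12 e20 e01.
set J := det3 _ in dh0 dh1 dh2.
have hJev := J_eval dh0 dh1 dh2.
pose v0 := vv 0 0 0.
have rinv l : r (p l) = p l by apply: hinv.
have r0 f : meval v0 (r f) = meval v0 f.
  apply: (meval_ah ra) => i; case: (ord3P i) => ->.
  - change (meval v0 (r (x1 k)) = v0 i0); rewrite r1.
    by case: (mev_x v0) => -> _ _.
  - change (meval v0 (r (x2 k)) = v0 i1); rewrite r2 mevalZ.
    by case: (mev_x v0) => _ -> _; rewrite /v0 /vv /= mulr0.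
  - change (meval v0 (r (x3 k)) = v0 i2); rewrite r3 mevalD mevalZ.
    by case: (mev_x v0) => _ -> ->; rewrite /v0 /vv /= mulr0 addr0.
pose Nv l j := meval v0 (mderiv j (p l)).
pose Rm m j := meval v0 (mderiv j (r 'X_m)).
have hR l j : Nv l j = \sum_(m < 3) Nv l m * Rm m j.
  rewrite /Nv -{1}rinv (chain ra) sum3 !mevalD !mevalM !r0.
  by rewrite sum3.
have dR : det3 Rm = xi.
  rewrite /det3 /Rm -/(x1 k) -/(x2 k) -/(x3 k) r1 r2 r3.
  rewrite !mderivD !mderivZ /x1 /x2 /x3 !mderivXU !mevalD !mevalZ !rmorph_nat /=.
  ring.
have dN : det3 Nv = 0.
  have : det3 Nv = det3 Nv * xi.
    by rewrite -dR -det3_mul; apply: det3_ext => i j; exact: hR i j.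
  move/eqP; rewrite -subr_eq0 -{1}[det3 Nv]mulr1 -mulrBr mulf_eq0 subr_eq0 eq_sym.
  by case/orP => [/eqP <- //|]; rewrite eq_sym (negbTE hxi1).
have hJ0 : meval (vv 0 1 0) J = 0 by rewrite hJev /J meval_det3; exact: dN.
case: (hsub) => hgpa hid _ _.
have inv1 : Defs.invariant G (x1 k) by move=> g hg; case: (hgood g hg).
have inv2 : Defs.invariant G (x2 k ^+ N).
  move=> g hg; rewrite (ah_X (gpa_ahom (hgpa g hg))).
  by case: (hgood g hg) => _ -> _ _; rewrite exprZn hNG // scale1r.
have inv3 : Defs.invariant G (f3 G) := fun h hh => f3_inv hsub hgood hh.
have [F1 hF1] := hsurj _ inv1.
have [F2 hF2] := hsurj _ inv2.
have [F3 hF3] := hsurj _ inv3.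
pose v := vv 0 1 0.
pose Mv l j := meval v (mderiv j (p l)).
have chainv F j : meval v (mderiv j (psi F)) =
    \sum_(l < 3) meval v (psi (mderiv l F)) * Mv l j.
  by rewrite (chain hpa) sum3 !mevalD !mevalM sum3.
pose fk i := if i == i0 then F1 else if i == i1 then F2 else F3.
pose Jf i j := meval v (mderiv j (psi (fk i))).
have hJf : det3 Jf = 0.
  rewrite (@det3_ext _ Jf (fun i j => \sum_(l < 3) meval v (psi (mderiv l (fk i))) * Mv l j));
    last by move=> i j; exact: chainv.
  rewrite det3_mul.
  have -> : det3 Mv = 0 by rewrite -hJ0 /J meval_det3.
  by rewrite mulr0.
case: N hN hNG inv2 hF2 hJf => // N' _ hNG inv2 hF2.
rewrite /det3 /Jf /fk /= hF1 hF2 hF3 /f3 !mderivXn !mderivD !mderivZ.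
rewrite /x1 /x2 /x3 !mderivXU.
rewrite !(mevalD, mevalZ, mevalMn, mevalM, rmorph_nat, rmorphXn, mevalXU, meval1) /v /vv /= => hJf.
have hS : (0 < size (undup [seq pr i | i <- G]))%N.
  by case: (undup _) (Sin hid) => //.
have : ((N'.+1 * size (undup [seq pr i | i <- G]))%N%:R : k) = 0.
  rewrite -hJf natrM mevalXU /=.
  by rewrite !(expr1n, mulr1, mul1r, mulr0, mul0r, mul0rn, addr0, add0r, subr0, sub0r).
by move/eqP; rewrite natf_eq0 muln_eq0 /= eqn0Ngt hS.
Qed.

End S.

End Aux.

Theorem lemma3p2p2 (k : closedFieldType) (char0 : [pchar k] =i pred0)
  (G : seq ({mpoly k[3]} -> {mpoly k[3]})) :
  is_finite_subgroup G ->
  generated_by_reflections G ->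
  (exists2 g, List.In g G & exists f, g f <> f) ->
  ~ invariants_poisson_iso_P G.
Proof. exact: (@Aux.main k char0 G). Qed.
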